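(* Let $n\ge2$ and let $X_1,\dots,X_n$ be unbounded balleans, $X=\prod_{i=1}^nX_i$. (a) If $X$ is normal, then the bornology $\mathcal B_X$ has a linearly ordered base. (b) If each $X_i$ is $\operatorname{cof}$-regular and $\mathcal B_X$ has a linearly ordered base, then $X$ is normal.
   Context: A ballean is a pair $(X,\mathcal E_X)$ where $X$ is a set and $\mathcal E_X$ is a family of subsets of $X\times X$ (entourages) such that: each $E\in\mathcal E_X$ contains the diagonal $\Delta_X$; for any $E,F\in\mathcal E_X$ there is $D\in\mathcal E_X$ with $E\circ F^{-1}\subset D$; and $\bigcup\mathcal E_X=X\times X$. For $E\in\mathcal E_X$, $x\in X$, $A\subset X$: $E[x]=\{y:(x,y)\in E\}$, $E[A]=\bigcup_{a\in A}E[a]$. $B\subset X$ is bounded if $B\subset E[x]$ for some $E\in\mathcal E_X$, $x\in X$; $\mathcal B_X$ is the family of bounded sets (bornology); $X$ is unbounded if $X\notin\mathcal B_X$. Sets $A,B$ are asymptotically disjoint if $E[A]\cap E[B]\in\mathcal B_X$ for all $E\in\mathcal E_X$; $U$ is an asymptotic neighborhood of $A$ if $E[A]\setminus U\in\mathcal B_X$ for all $E$; $X$ is normal if any two asymptotically disjoint sets have disjoint asymptotic neighborhoods. The product $\prod_{i=1}^n X_i$ has entourages $\{((x_i)_i,(y_i)_i):(x_i,y_i)\in E_i\ \forall i\}$ for $E_i\in\mathcal E_{X_i}$. A linearly ordered base of a bornology is a subfamily linearly ordered by inclusion such that each bounded set is contained in a member of it. For a poset $P$, $\operatorname{cof}(P)$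 is the least cardinality of a cofinal subset (equal to $1$ if $P$ has a largest element). A ballean $X$ is $\operatorname{cof}$-regular if $\operatorname{cof}(\mathcal E_X)=\operatorname{cof}(\mathcal B_X)$, where both families are ordered by inclusion. *)

(* Defs.v *)
From mathcomp Require Import all_boot.
Set Implicit Arguments. Unset Strict Implicit. Unset Printing Implicit Defensive.

(* A "pre-ballean": a carrier type and a family of entourages (relations on
   the carrier, i.e. subsets of X x X). Subsets are predicates. *)
Record ballean := Ballean {
  car : Type;
  ent : (car -> car -> Prop) -> Prop }.
Arguments ent : clear implicits.

Definition is_ballean (X : ballean) : Prop :=
  (forall E, ent X E -> forall x, E x x) /\
  (forall E F, ent X E -> ent X F ->
     exists D, ent X D /\
       forall x y, (exists z, E x z /\ F y z) -> D x y) /\  (* E o F^-1 ⊆ D *)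
  (forall x y, exists E, ent X E /\ E x y).

Definition ball (X : ballean) (E : car X -> car X -> Prop) (A : car X -> Prop)
  : car X -> Prop := fun y => exists a, A a /\ E a y.

Definition bounded (X : ballean) (B : car X -> Prop) : Prop :=
  exists E x, ent X E /\ forall b, B b -> E x b.

Definition unbounded (X : ballean) : Prop := ~ bounded (fun _ : car X => True).

Definition asym_disjoint (X : ballean) (A B : car X -> Prop) : Prop :=
  forall E, ent X E -> bounded (fun y => ball E A y /\ ball E B y).

Definition asym_nbhd (X : ballean) (U A : car X -> Prop) : Prop :=
  forall E, ent X E -> bounded (fun y => ball E A y /\ ~ U y).

Definition normal (X : ballean) : Prop :=
  forall A B : car X -> Prop, asym_disjoint A B ->
    exists U V : car X -> Prop,
      asym_nbhd U A /\ asym_nbhd V B /\ (forall x, ~ (U x /\ V x)).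

Definition has_linear_base (X : ballean) : Prop :=
  exists L : (car X -> Prop) -> Prop,
    (forall A, L A -> bounded A) /\
    (forall A B, L A -> L B -> (forall x, A x -> B x) \/ (forall x, B x -> A x)) /\
    (forall B, bounded B -> exists A, L A /\ forall x, B x -> A x).

(* Cofinality.  A poset is given by a predicate P on a type T with order le. *)
Definition cofinal (T : Type) (le : T -> T -> Prop) (P C : T -> Prop) : Prop :=
  (forall c, C c -> P c) /\ (forall p, P p -> exists c, C c /\ le p c).

(* C is a cofinal subset of least cardinality: it injects into every cofinal
   subset. *)
Definition min_cofinal (T : Type) (le : T -> T -> Prop) (P C : T -> Prop) : Prop :=
  cofinal le P C /\
  forall C', cofinal le P C' ->
    exists f : {t | C t} -> {t | C' t}, injective f.

Definition cof_eq (T1 T2 : Type) (le1 : T1 -> T1 -> Prop) (P1 : T1 -> Prop)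
  (le2 : T2 -> T2 -> Prop) (P2 : T2 -> Prop) : Prop :=
  exists C1 C2, min_cofinal le1 P1 C1 /\ min_cofinal le2 P2 C2 /\
    exists f : {t | C1 t} -> {t | C2 t}, bijective f.

Definition rel_incl (T : Type) (E F : T -> T -> Prop) : Prop :=
  forall x y, E x y -> F x y.
Definition set_incl (T : Type) (A B : T -> Prop) : Prop :=
  forall x, A x -> B x.

Definition cof_regular (X : ballean) : Prop :=
  cof_eq (@rel_incl (car X)) (ent X) (@set_incl (car X)) (@bounded X).

Definition prod_ballean (n : nat) (Xs : 'I_n -> ballean) : ballean :=
  @Ballean (forall i, car (Xs i))
    (fun R => exists Es : forall i, car (Xs i) -> car (Xs i) -> Prop,
       (forall i, ent (Xs i) (Es i)) /\
       (forall x y, R x y <-> forall i, Es i (x i) (y i))).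

(* Main.v *)
Require Import Defs.
From mathcomp Require Import all_boot.
From mathcomp Require Import boolp.
Set Implicit Arguments. Unset Strict Implicit. Unset Printing Implicit Defensive.
From mathcomp Require Import wochoice.

Section Ball.
Variable Y : ballean.
Hypothesis HY : is_ballean Y.
Local Notation T := (car Y).

Lemma ent_refl E : ent Y E -> forall x, E x x.
Proof. by case: HY => h _; apply: h. Qed.

Lemma ent_ex (x y : T) : exists E, ent Y E /\ E x y.
Proof. by case: HY => _ [_ h]; apply: h. Qed.

Lemma ent_inv E : ent Y E -> exists D, ent Y D /\ forall x y, E x y -> D y x.
Proof.
move=> hE; case: HY => _ [h _].
have [D [hD HD]] := h E E hE hE.
exists D; split => // x y Exy; apply: HD; exists y; split => //; exact: ent_refl.
Qed.

Lemma ent_comp E F : ent Y E -> ent Y F ->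
  exists D, ent Y D /\ forall x y z, E x y -> F y z -> D x z.
Proof.
move=> hE hF; have [G [hG HG]] := ent_inv hF.
case: HY => _ [h _]; have [D [hD HD]] := h E G hE hG.
exists D; split => // x y z Exy Fyz; apply: HD; exists y; split => //; exact: HG.
Qed.

Lemma ent_union E F : ent Y E -> ent Y F ->
  exists D, ent Y D /\ (forall x y, E x y -> D x y) /\ (forall x y, F x y -> D x y).
Proof.
move=> hE hF; have [G [hG HG]] := ent_inv hF.
case: HY => _ [h _]; have [D [hD HD]] := h E G hE hG.
exists D; split => //; split => x y H; apply: HD.
- exists y; split => //; exact: ent_refl.
- exists x; split; [exact: ent_refl|exact: HG].
Qed.

Lemma bounded_sub (A B : T -> Prop) : bounded B -> (forall x, A x -> B x) -> bounded A.
Proof. by move=> [E [x [hE HB]]] sAB; exists E, x; split => // b /sAB /HB. Qed.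

Lemma bounded_at (B : T -> Prop) (y : T) : bounded B ->
  exists E, ent Y E /\ forall b, B b -> E y b.
Proof.
move=> [E [x [hE HB]]]; have [F [hF Fyx]] := ent_ex y x.
have [D [hD HD]] := ent_comp hF hE.
by exists D; split => // b /HB; apply: HD.
Qed.

Lemma bounded_union (A B : T -> Prop) : bounded A -> bounded B ->
  bounded (fun x => A x \/ B x).
Proof.
move=> hA [E [x [hE HB]]]; have [F [hF HA]] := bounded_at x hA.
have [D [hD [D1 D2]]] := ent_union hE hF.
exists D, x; split => // b [/HA/D2|/HB/D1] //.
Qed.

Lemma bounded_empty (y : T) : @bounded Y (fun _ => False).
Proof. have [E [hE _]] := ent_ex y y; by exists E, y. Qed.

Lemma bounded_pt (y : T) : @bounded Y (fun x => x = y).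
Proof. have [E [hE H]] := ent_ex y y; exists E, y; split => // b ->; exact: ent_refl. Qed.

End Ball.

Lemma dchoice (I : Type) (T : I -> Type) (P : forall i, T i -> Prop) :
  (forall i, exists t, P i t) -> exists f : forall i, T i, forall i, P i (f i).
Proof.
move=> h; exists (fun i => sval (cid (h i))) => i; exact: (svalP (cid (h i))).
Qed.

Section Prod.
Variable n : nat.
Variable Xs : 'I_n -> ballean.
Hypothesis HX : forall i, is_ballean (Xs i).
Local Notation PX := (prod_ballean Xs).
Local Notation RR i := (car (Xs i) -> car (Xs i) -> Prop).

Definition pent (Es : forall i, RR i) : car PX -> car PX -> Prop :=
  fun x y => forall i, Es i (x i) (y i).

Lemma pent_ent (Es : forall i, RR i) : (forall i, ent (Xs i) (Es i)) -> ent PX (pent Es).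
Proof. by move=> h; exists Es; split. Qed.

Lemma PX_refl R : ent PX R -> forall x, R x x.
Proof. move=> [Es [hE HR]] x; apply/HR => i; exact: ent_refl. Qed.

Lemma PX_union R1 R2 : ent PX R1 -> ent PX R2 ->
  exists D, ent PX D /\ (forall x y, R1 x y -> D x y) /\ (forall x y, R2 x y -> D x y).
Proof.
move=> [Es [hE H1]] [Fs [hF H2]].
have [Ds HD] := @dchoice _ _ (fun i (D : RR i) => ent (Xs i) D /\
   (forall x y, Es i x y -> D x y) /\ (forall x y, Fs i x y -> D x y))
   (fun i => ent_union (HX i) (hE i) (hF i)).
exists (pent Ds); split; first by apply: pent_ent => i; case: (HD i).
split => x y.
- by move/H1 => h i; case: (HD i) => _ [+ _]; apply.
- by move/H2 => h i; case: (HD i) => _ [_ +]; apply.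
Qed.

Lemma prod_bounded (K : car PX -> Prop) (c : car PX) (Es : forall i, RR i) :
  (forall i, ent (Xs i) (Es i)) -> (forall x, K x -> forall i, Es i (c i) (x i)) ->
  bounded K.
Proof. by move=> hE HK; exists (pent Es), c; split; [apply: pent_ent|]. Qed.

Lemma bounded_PX_inv (K : car PX -> Prop) (c : car PX) : bounded K ->
  exists Es : forall i, RR i, (forall i, ent (Xs i) (Es i)) /\
    forall x, K x -> forall i, Es i (c i) (x i).
Proof.
move=> [R [x0 [[Es [hE HR]] HK]]].
have [Fs HF] := @dchoice _ _ (fun i (F : RR i) => ent (Xs i) F /\
   forall y, Es i (x0 i) y -> F (c i) y)
   (fun i => bounded_at (HX i) (c i) (ex_intro _ (Es i) (ex_intro _ (x0 i) (conj (hE i) (fun y h => h))))).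
exists Fs; split; first by move=> i; case: (HF i).
move=> x /HK /HR h i; case: (HF i) => _; apply; exact: h.
Qed.

Lemma proj_bounded (K : car PX -> Prop) i : bounded K ->
  bounded (fun y => exists x, K x /\ x i = y).
Proof.
move=> [R [x0 [[Es [hE HR]] HK]]]; exists (Es i), (x0 i); split => //.
by move=> b [x [/HK/HR h <-]].
Qed.

End Prod.

Section WO.
Variables (T : eqType) (R : rel T).
Hypothesis HR : well_order R.

Lemma wo_min (S : T -> Prop) : (exists x, S x) -> exists m, S m /\ forall s, S s -> R m s.
Proof.
move=> [x Sx].
have ne : nonempty [pred z | `[< S z >]].
  by exists x; rewrite inE; apply/asboolP.
have [m [[Am lb] _]] := HR ne.
exists m; split; first by move: Am; rewrite inE => /asboolP.
by move=> s Ss; apply: lb; rewrite inE; apply/asboolP.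
Qed.

Lemma wo_min2 x y : exists m, (m = x \/ m = y) /\ R m x /\ R m y.
Proof.
have [m [Hm lb]] := @wo_min (fun z => z = x \/ z = y) (ex_intro _ x (or_introl erefl)).
by exists m; split => //; split; apply: lb; [left|right].
Qed.

Lemma wo_total x y : R x y \/ R y x.
Proof. by have [m [[->|->] [h1 h2]]] := wo_min2 x y; [left|right]. Qed.

Lemma wo_refl x : R x x.
Proof. by case: (wo_total x x). Qed.

Lemma wo_anti x y : R x y -> R y x -> x = y.
Proof.
move=> hxy hyx.
have ne : nonempty [pred z | (z == x) || (z == y)].
  by exists x; rewrite inE eqxx.
have [m [[Am lb] U]] := HR ne.
have mx : minimum_of R [pred z | (z == x) || (z == y)] x.
  split; first by rewrite inE eqxx.
  by move=> z; rewrite inE => /orP[]/eqP->; [apply: wo_refl|].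
have my : minimum_of R [pred z | (z == x) || (z == y)] y.
  split; first by rewrite inE eqxx orbT.
  by move=> z; rewrite inE => /orP[]/eqP->; [|apply: wo_refl].
by rewrite -(U _ mx) -(U _ my).
Qed.

Lemma wo_trans x y z : R x y -> R y z -> R x z.
Proof.
move=> hxy hyz.
have [m [Hm lb]] := @wo_min (fun w => w = x \/ w = y \/ w = z) (ex_intro _ x (or_introl erefl)).
case: Hm => [e|[e|e]]; subst m; first by apply: lb; right; right.
- have e : x = y by apply: wo_anti => //; apply: lb; left.
  by rewrite e.
- have e : y = z by apply: wo_anti => //; apply: lb; right; left.
  by rewrite -e.
Qed.

End WO.

Lemma byContra (P : Prop) : (~ P -> False) -> P.
Proof. by move=> h; case: (pselect P) => // /h. Qed.

Section PartA.
Variable n : nat.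
Variable Xs : 'I_n -> ballean.
Hypothesis HX : forall i, is_ballean (Xs i).
Hypothesis HU : forall i, unbounded (Xs i).
Variables i0 i1 : 'I_n.
Hypothesis Hi : i1 != i0.
Local Notation PX := (prod_ballean Xs).
Local Notation RR i := (car (Xs i) -> car (Xs i) -> Prop).
Variable pt : car PX.

Definition upd (x : car PX) (y : car (Xs i0)) : car PX :=
  @dfwith 'I_n (fun i => car (Xs i)) x i0 y.

Lemma upd_in x y : upd x y i0 = y.
Proof. exact: dfwith_in. Qed.

Lemma upd_out x y j : j != i0 -> upd x y j = x j.
Proof. by move=> h; apply: dfwith_out; rewrite eq_sym. Qed.

Definition Aset : car PX -> Prop := fun x => forall j, j != i0 -> x j = pt j.
Definition Bset : car PX -> Prop := fun x => x i0 = pt i0.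
Definition sameZ (x y : car PX) := forall j, j != i0 -> x j = y j.

Lemma ball_mono (R R' : car PX -> car PX -> Prop) S x :
  (forall a b, R a b -> R' a b) -> ball R S x -> ball R' S x.
Proof. by move=> h [a [Sa Rax]]; exists a; split => //; apply: h. Qed.

Lemma ballA_intro (Fs : forall i, RR i) x : (forall i, ent (Xs i) (Fs i)) ->
  (forall j, j != i0 -> Fs j (pt j) (x j)) -> ball (pent Fs) Aset x.
Proof.
move=> hF h; exists (upd pt (x i0)); split.
  by move=> j hj; rewrite upd_out.
move=> i; case: (eqVneq i i0) => [->|ne].
  by rewrite upd_in; apply: ent_refl.
by rewrite upd_out //; apply: h.
Qed.

Lemma ballA_sameZ R x p : ent PX R -> ball R Aset x -> sameZ x p -> ball R Aset p.
Proof.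
move=> [Es [hE HR]] [a [Aa /HR Rax]] sxp; exists (upd a (p i0)); split.
  by move=> j hj; rewrite upd_out // Aa.
apply/HR => i; case: (eqVneq i i0) => [->|ne].
  by rewrite upd_in; apply: ent_refl.
by rewrite upd_out // -sxp //; apply: Rax.
Qed.

Lemma ballB_intro (Fs : forall i, RR i) x : (forall i, ent (Xs i) (Fs i)) ->
  Fs i0 (pt i0) (x i0) -> ball (pent Fs) Bset x.
Proof.
move=> hF h; exists (upd x (pt i0)); split; first by rewrite /Bset upd_in.
move=> i; case: (eqVneq i i0) => [->|ne]; first by rewrite upd_in.
by rewrite upd_out //; apply: ent_refl.
Qed.

Definition Zb (S : (car PX -> car PX -> Prop) -> Prop) :=
  exists F, ent PX F /\ forall E, S E -> forall x, ball E Aset x -> ball F Aset x.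

Lemma Zb_mono (S S' : (car PX -> car PX -> Prop) -> Prop) :
  (forall E, S E -> S' E) -> Zb S' -> Zb S.
Proof. by move=> h [F [hF HF]]; exists F; split => // E /h; apply: HF. Qed.

Lemma not_Zb_all : ~ Zb (ent PX).
Proof.
move=> [F [[Fs [hF HF]] HFb]]; case: (@HU i1).
exists (Fs i1), (pt i1); split => // t _.
pose z := @dfwith 'I_n (fun i => car (Xs i)) pt i1 t.
have [Gs HG] := @dchoice _ _ (fun i (G : RR i) => ent (Xs i) G /\ G (pt i) (z i))
  (fun i => ent_ex (HX i) (pt i) (z i)).
have hG : forall i, ent (Xs i) (Gs i) by move=> i; case: (HG i).
have : ball (pent Gs) Aset z by apply: ballA_intro => // j _; case: (HG j).
move=> /(HFb _ (pent_ent hG)) [a [Aa /HF Faz]].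
by move: (Faz i1); rewrite Aa // /z dfwith_in.
Qed.

Lemma asym_AB : asym_disjoint Aset Bset.
Proof.
move=> R [Es [hE HR]].
apply: (prod_bounded (c := pt) hE) => x [[a [Aa /HR Rax]] [b [Bb /HR Rbx]]] i.
case: (eqVneq i i0) => [->|ne]; first by rewrite -Bb; apply: Rbx.
by rewrite -(Aa i ne); apply: Rax.
Qed.

Hypothesis Hnorm : normal PX.

Section UV.
Variables U V : car PX -> Prop.
Hypothesis HUA : asym_nbhd U Aset.
Hypothesis HVB : asym_nbhd V Bset.
Hypothesis HUV : forall x, ~ (U x /\ V x).

Definition Kset E := fun x => ball E Aset x /\ ~ U x.

Lemma Cond (r : car (Xs i0) -> Prop) G : ent PX G ->
  (forall y, r y -> exists x, Kset G x /\ x i0 = y) \/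
  (forall x, ball G Aset x -> exists x', r (x' i0) /\ ~ V x' /\ sameZ x x').
Proof.
move=> hG; case: (pselect (forall y, r y -> exists x, Kset G x /\ x i0 = y)) => [h|h].
  by left.
right; have [y /not_implyP [ry hy]] := (existsNP _).2 h.
move=> x hx; apply: byContra => hno.
pose p := upd x y.
have sxp : sameZ x p by move=> j hj; rewrite /p upd_out.
have bp : ball G Aset p by apply: ballA_sameZ sxp.
have hUp : U p.
  case: (pselect (U p)) => // nU; exfalso; apply: hy; exists p; split; first exact: (conj bp nU).
  by rewrite /p upd_in.
have hVp : V p.
  case: (pselect (V p)) => // nV; exfalso; apply: hno; exists p; split; first by rewrite /p upd_in.
  by split.
exact: (HUV (conj hUp hVp)).
Qed.

Lemma Nr_bounded (r : car (Xs i0) -> Prop) : bounded r ->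
  @bounded PX (fun x' : car PX => r (x' i0) /\ ~ V x').
Proof.
move=> hr; have [G [hG HG]] := bounded_at (HX i0) (pt i0) hr.
have [Gs HGs] := @dchoice _ _ (fun i (G : RR i) => ent (Xs i) G /\ G (pt i) (pt i))
  (fun i => ent_ex (HX i) (pt i) (pt i)).
pose Es := @dfwith 'I_n (fun i => RR i) Gs i0 G.
have hE : forall i, ent (Xs i) (Es i).
  move=> i; case: (eqVneq i i0) => [->|ne]; first by rewrite /Es dfwith_in.
  by rewrite /Es dfwith_out 1?eq_sym //; case: (HGs i).
apply: bounded_sub (HVB (pent_ent hE)) _ => x [rx nV]; split => //.
apply: ballB_intro => //; rewrite /Es dfwith_in; exact: HG.
Qed.

Local Notation RelX := (car PX -> car PX -> Prop).
Definition Rw : rel RelX := sval (well_ordering_principle RelX).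
Lemma HRw : well_order Rw.
Proof. exact: svalP (well_ordering_principle RelX). Qed.

Lemma Rw_trans a b c : Rw a b -> Rw b c -> Rw a c.
Proof. exact: (wo_trans HRw). Qed.
Lemma Rw_anti a b : Rw a b -> Rw b a -> a = b.
Proof. exact: (wo_anti HRw). Qed.
Lemma Rw_refl a : Rw a a.
Proof. exact: (wo_refl HRw). Qed.
Lemma Rw_total a b : Rw a b \/ Rw b a.
Proof. exact: (wo_total HRw). Qed.

Definition ltw (E E' : RelX) := Rw E E' /\ E <> E'.
Definition seg E := fun E' => ent PX E' /\ ltw E' E.
Definition Sbad E := ent PX E /\ ~ Zb (seg E).
Definition Iset E := ent PX E /\ forall s, Sbad s -> ltw E s.

Lemma le_lt a b c : Rw a b -> ltw b c -> ltw a c.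
Proof.
move=> hab [hbc nbc]; split; first exact: Rw_trans hab hbc.
by move=> eac; subst c; apply: nbc; by apply: Rw_anti.
Qed.

Lemma not_Zb_I : ~ Zb Iset.
Proof.
move=> hZ; case: (pselect (exists s, Sbad s)) => [hs|hs].
  have [s0 [[hs0 nZ] lb]] := wo_min HRw hs.
  apply: nZ; apply: Zb_mono hZ => E [hE lE]; split => // s /lb hs1.
  case: lE => l1 l2; split; first exact: Rw_trans l1 hs1.
  move=> es; subst s; apply: l2; by apply: Rw_anti.
apply: not_Zb_all; apply: Zb_mono hZ => E hE; split => // s hs1.
by exfalso; apply: hs; exists s.
Qed.

Lemma Zb_seg E : Iset E -> Zb (fun E' => Iset E' /\ Rw E' E).
Proof.
move=> [hE lE].
have : Zb (seg E).
  apply: byContra => nZ; have [] := lE E (conj hE nZ); done.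
move=> [F [hF HF]]; have [D [hD [D1 D2]]] := PX_union HX hF hE.
exists D; split => // E' [[hE' _] RE'] x bx.
case: (pselect (E' = E)) => [eE|nE].
  by subst E'; apply: ball_mono bx.
by apply: (ball_mono D1); apply: (HF E') => //; split.
Qed.

Definition rset E := fun y => exists E', Iset E' /\ Rw E' E /\ exists x, Kset E' x /\ x i0 = y.
Definition Mset E := fun x => rset E (x i0) /\ exists x', rset E (x' i0) /\ ~ V x' /\ sameZ x x'.

Lemma r_bounded E : Iset E -> bounded (rset E).
Proof.
move=> /Zb_seg [F [hF HF]].
apply: bounded_sub (proj_bounded i0 (HUA hF)) _ => y [E' [hI [RE [x [[bx nU] <-]]]]].
exists x; split => //; split => //; apply: (HF E') => //.
Qed.

Lemma M_bounded E : Iset E -> @bounded PX (Mset E).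
Proof.
move=> hI; have hr := r_bounded hI.
have [G [hG HG]] := bounded_at (HX i0) (pt i0) hr.
have [Hs [hH HH]] := bounded_PX_inv HX pt (Nr_bounded hr).
pose Es := @dfwith 'I_n (fun i => RR i) Hs i0 G.
have hE : forall i, ent (Xs i) (Es i).
  move=> i; case: (eqVneq i i0) => [->|ne]; first by rewrite /Es dfwith_in.
  by rewrite /Es dfwith_out 1?eq_sym.
apply: (prod_bounded (c := pt) hE) => x [rx [x' [rx' [nV sx]]]] i.
case: (eqVneq i i0) => [->|ne]; first by rewrite /Es dfwith_in; apply: HG.
rewrite /Es dfwith_out 1?eq_sym // sx //; exact: (HH x' (conj rx' nV)).
Qed.

Lemma r_mono E1 E2 : Rw E1 E2 -> forall y, rset E1 y -> rset E2 y.
Proof.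
move=> h y [E' [hI [RE hx]]]; exists E'; split => //; split => //.
exact: Rw_trans RE h.
Qed.

Lemma M_mono E1 E2 : Rw E1 E2 -> forall x, Mset E1 x -> Mset E2 x.
Proof.
move=> h x [rx [x' [rx' hx']]]; split; first exact: r_mono rx.
by exists x'; split => //; apply: r_mono rx'.
Qed.

Lemma step1 (G0 : RR i0) : ent (Xs i0) G0 ->
  exists E, Iset E /\ forall y, G0 (pt i0) y -> rset E y.
Proof.
move=> hG0; apply: byContra => hno; apply: not_Zb_I.
have hb : bounded (G0 (pt i0)) by exists G0, (pt i0).
have [Hs [hH HH]] := bounded_PX_inv HX pt (Nr_bounded hb).
exists (pent Hs); split; first exact: pent_ent.
move=> E hI x bx.
have [hE _] := hI.
case: (Cond (G0 (pt i0)) hE) => [h|h].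
  exfalso; apply: hno; exists E; split => // y /h [x0 [Kx0 ex]].
  exists E; split => //; split; first exact: Rw_refl.
  by exists x0.
have [x' [bx' [nV sx]]] := h x bx.
apply: ballA_intro => // j hj; rewrite sx //; exact: (HH x' (conj bx' nV)).
Qed.

Lemma step2 G : ent PX G ->
  exists E, Iset E /\ forall x, ball G Aset x ->
    exists x', rset E (x' i0) /\ ~ V x' /\ sameZ x x'.
Proof.
move=> hG; apply: byContra => hno; case: (@HU i0).
apply: bounded_sub (proj_bounded i0 (HUA hG)) _ => y _.
have [G0 [hG0 G0y]] := ent_ex (HX i0) (pt i0) y.
have [E [hI HE]] := step1 hG0.
have [hE _] := hI.
case: (Cond (rset E) hG) => [h|h].
  have [x [Kx <-]] := h y (HE y G0y); by exists x.
by exfalso; apply: hno; exists E.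
Qed.

Lemma linear_base_UV : has_linear_base PX.
Proof.
exists (fun S => exists E, Iset E /\ S = Mset E); split.
  by move=> S [E [hI ->]]; apply: M_bounded.
split.
  move=> S1 S2 [E1 [_ ->]] [E2 [_ ->]].
  by case: (Rw_total E1 E2) => h; [left|right]; apply: M_mono.
move=> K hK; have [Es [hE HK]] := bounded_PX_inv HX pt hK.
have [E1 [hI1 H1]] := step1 (hE i0).
have [E2 [hI2 H2]] := step2 (pent_ent hE).
have key : forall E, Iset E -> Rw E1 E -> Rw E2 E -> forall x, K x -> Mset E x.
  move=> E hI h1 h2 x Kx; split; first by apply: r_mono h1 _ _; apply: H1; apply: HK.
  have bx : ball (pent Es) Aset x by apply: ballA_intro => // j _; apply: HK.
  have [x' [rx' hx']] := H2 x bx; exists x'; split => //; exact: r_mono rx'.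
case: (Rw_total E1 E2) => h.
  exists (Mset E2); split; first by exists E2.
  by apply: key => //; apply: Rw_refl.
exists (Mset E1); split; first by exists E1.
by apply: key => //; apply: Rw_refl.
Qed.

End UV.

Lemma linear_base_A : has_linear_base PX.
Proof.
have [U [V [hU [hV hUV]]]] := Hnorm asym_AB.
exact: linear_base_UV hU hV hUV.
Qed.

End PartA.

Lemma sig_eq (T : Type) (P : T -> Prop) (a b : {t | P t}) : sval a = sval b -> a = b.
Proof. by case: a => a pa; case: b => b pb /= e; subst b; congr exist. Qed.

Section PartB.
Variable n : nat.
Variable Xs : 'I_n -> ballean.
Hypothesis HX : forall i, is_ballean (Xs i).
Hypothesis HU : forall i, unbounded (Xs i).
Variable i0 : 'I_n.
Local Notation PX := (prod_ballean Xs).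
Local Notation RR i := (car (Xs i) -> car (Xs i) -> Prop).
Variable pt : car PX.
Variable L : (car PX -> Prop) -> Prop.
Hypothesis HL1 : forall A, L A -> bounded A.
Hypothesis HL2 : forall A B, L A -> L B -> (forall x, A x -> B x) \/ (forall x, B x -> A x).
Hypothesis HL3 : forall B, bounded B -> exists A, L A /\ forall x, B x -> A x.

Lemma PX_bounded_empty : @bounded PX (fun _ => False).
Proof.
have [Gs HG] := @dchoice _ _ (fun i (G : RR i) => ent (Xs i) G /\ G (pt i) (pt i))
  (fun i => ent_ex (HX i) (pt i) (pt i)).
by apply: (prod_bounded (c := pt) (Es := Gs)) => // i; case: (HG i).
Qed.

Lemma PX_bounded_union (A B : car PX -> Prop) : bounded A -> bounded B ->
  bounded (fun x => A x \/ B x).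
Proof.
move=> /(bounded_PX_inv HX pt) [Es [hE HA]] /(bounded_PX_inv HX pt) [Fs [hF HB]].
have [Ds HD] := @dchoice _ _ (fun i (D : RR i) => ent (Xs i) D /\
   (forall x y, Es i x y -> D x y) /\ (forall x y, Fs i x y -> D x y))
   (fun i => ent_union (HX i) (hE i) (hF i)).
apply: (prod_bounded (c := pt) (Es := Ds)); first by move=> i; case: (HD i).
move=> x [/HA h|/HB h] i; case: (HD i) => _ [D1 D2]; [apply: D1|apply: D2]; exact: h.
Qed.

Lemma PX_bounded_sub (A B : car PX -> Prop) : bounded B -> (forall x, A x -> B x) -> bounded A.
Proof. by move=> [E [x [hE HB]]] sAB; exists E, x; split => // b /sAB /HB. Qed.

Definition Small (T : Type) (P : T -> Prop) :=
  forall m : T -> car PX -> Prop, (forall t, P t -> bounded (m t)) ->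
    bounded (fun x => exists t, P t /\ m t x).

Lemma small_sub T (P P' : T -> Prop) : Small P' -> (forall t, P t -> P' t) -> Small P.
Proof.
move=> hS sPP' m hm.
have hb : bounded (fun x => exists t, P' t /\ (P t /\ m t x)).
  apply: (hS (fun t x => P t /\ m t x)) => t P't.
  case: (pselect (P t)) => [Pt|nP].
    by apply: PX_bounded_sub (hm t Pt) _ => x [].
  by apply: PX_bounded_sub PX_bounded_empty _ => x [].
apply: PX_bounded_sub hb _ => x [t [Pt mx]].
by exists t; split; [apply: sPP'|].
Qed.

Lemma small_add1 T (P : T -> Prop) t0 : Small P -> Small (fun t => P t \/ t = t0).
Proof.
move=> hS m hm.
have h1 := hS m (fun t Pt => hm t (or_introl Pt)).
have h2 := hm t0 (or_intror erefl).
apply: PX_bounded_sub (PX_bounded_union h1 h2) _ => x [t [[Pt|->] mx]].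
  by left; exists t.
by right.
Qed.

Lemma small_union T1 T2 (P : T1 -> Prop) (Q : T1 -> T2 -> Prop) (S : T2 -> Prop) :
  Small P -> (forall t, P t -> Small (Q t)) ->
  (forall s, S s -> exists t, P t /\ Q t s) -> Small S.
Proof.
move=> hP hQ hS m hm.
have hb : bounded (fun x => exists t, P t /\ (exists s, Q t s /\ S s /\ m s x)).
  apply: (hP (fun t x => exists s, Q t s /\ S s /\ m s x)) => t Pt.
  have hb : bounded (fun x => exists s, Q t s /\ (S s /\ m s x)).
    apply: (hQ t Pt (fun s x => S s /\ m s x)) => s _.
    case: (pselect (S s)) => [Ss|nS].
      by apply: PX_bounded_sub (hm s Ss) _ => x [].
    by apply: PX_bounded_sub PX_bounded_empty _ => x [].
  apply: PX_bounded_sub hb _ => x [s [Qs [Ss mx]]].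
  by exists s; split => //; split.
apply: PX_bounded_sub hb _ => x [s [Ss mx]].
have [t [Pt Qts]] := hS s Ss.
by exists t; split => //; exists s; split => //; split.
Qed.

Lemma small_single T (t0 : T) : Small (fun t => t = t0).
Proof.
move=> m hm; apply: PX_bounded_sub (hm t0 erefl) _ => x [t [-> mx]] //.
Qed.

Lemma small_tuple T (P : T -> Prop) (G0 : 'I_n -> T) : Small P ->
  Small (fun ws : 'I_n -> T => forall i, P (ws i)).
Proof.
move=> hP.
pose S k (G : 'I_n -> T) := fun ws : 'I_n -> T =>
  (forall i, P (ws i)) /\ forall i : 'I_n, k <= i -> ws i = G i.
have key : forall k G, Small (S k G).
  elim=> [|k IH] G.
    apply: (@small_sub _ (S 0 G) (fun t => t = G) (@small_single _ G)) => ws [_ h]; apply: funext => i; exact: h.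
  case: (ltnP k n) => hk.
    pose ko := Ordinal hk.
    apply: (small_union (P := P) (Q := fun t => S k (fun j => if j == ko then t else G j))) => //.
    move=> ws [hw h]; exists (ws ko); split => //; split => // i ki.
    case: (eqVneq i ko) => [->|ne]; first by [].
    apply: h; rewrite ltn_neqAle ki andbT; apply/eqP => e.
    by move/eqP: ne; apply; apply: val_inj; rewrite /= e.
  apply: (small_sub (IH G)) => ws [hw h]; split => // i ki.
  by exfalso; move: (ltn_ord i); rewrite ltnNge (leq_trans hk ki).
apply: (small_sub (key n G0)) => ws hw; split => // i ni.
by exfalso; move: (ltn_ord i); rewrite ltnNge ni.
Qed.

Lemma slab_bounded i (p : car (Xs i) -> Prop) : bounded p ->
  bounded (fun x : car PX => p (x i) /\ forall j, j != i -> x j = pt j).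
Proof.
move=> hp; have [G [hG HG]] := bounded_at (HX i) (pt i) hp.
have [Gs HGs] := @dchoice _ _ (fun i (G : RR i) => ent (Xs i) G /\ G (pt i) (pt i))
  (fun i => ent_ex (HX i) (pt i) (pt i)).
pose Es := @dfwith 'I_n (fun i => RR i) Gs i G.
have hE : forall j, ent (Xs j) (Es j).
  move=> j; case: (eqVneq j i) => [->|ne]; first by rewrite /Es dfwith_in.
  by rewrite /Es dfwith_out 1?eq_sym //; case: (HGs j).
apply: (prod_bounded (c := pt) hE) => x [px hx] j.
case: (eqVneq j i) => [->|ne]; first by rewrite /Es dfwith_in; apply: HG.
rewrite /Es dfwith_out 1?eq_sym // hx //; case: (HGs j) => _; exact.
Qed.

Lemma slab_pt i (p : car (Xs i) -> Prop) y : p y ->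
  let z := @dfwith 'I_n (fun i => car (Xs i)) pt i y in
  p (z i) /\ forall j, j != i -> z j = pt j.
Proof.
move=> py z; split; first by rewrite /z dfwith_in.
by move=> j hj; rewrite /z dfwith_out // eq_sym.
Qed.

Lemma BigInj T (P : T -> Prop) i (C : (car (Xs i) -> Prop) -> Prop) :
  min_cofinal (@set_incl (car (Xs i))) (@bounded (Xs i)) C ->
  ~ Small P -> exists f : {c | C c} -> {t | P t}, injective f.
Proof.
move=> [_ hmin] nS.
have [m [hm nb]] : exists m : T -> car PX -> Prop, (forall t, P t -> bounded (m t)) /\
    ~ bounded (fun x => exists t, P t /\ m t x).
  apply: byContra => h; apply: nS => m hm; apply: byContra => nb; apply: h.
  by exists m.
have hex : forall t, exists l : car PX -> Prop, P t -> L l /\ forall x, m t x -> l x.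
  move=> t; case: (pselect (P t)) => [Pt|nP]; last by exists (m t).
  have [A [LA hA]] := HL3 (hm t Pt); by exists A.
have [l hl] := choice hex.
have cof : forall K, bounded K -> exists t, P t /\ forall x, K x -> l t x.
  move=> K hK; apply: byContra => hno.
  have [lK [LK HK]] := HL3 hK.
  apply: nb; apply: PX_bounded_sub (HL1 LK) _ => x [t [Pt mx]].
  have [Ll Hl] := hl t Pt.
  case: (HL2 Ll LK) => h; first by apply: h; apply: Hl.
  by exfalso; apply: hno; exists t; split => // y /HK /h.
pose projS (S : car PX -> Prop) := fun y => exists x, S x /\ x i = y.
pose C' := fun p => exists t, P t /\ p = projS (l t).
have cofC' : cofinal (@set_incl (car (Xs i))) (@bounded (Xs i)) C'.
  split.
    move=> c [t [Pt ->]]; apply: proj_bounded; exact: HL1 (hl t Pt).1.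
  move=> p hp; have [t [Pt Ht]] := cof _ (slab_bounded hp).
  exists (projS (l t)); split; first by exists t.
  move=> y py; have [pz hz] := slab_pt py.
  by exists (@dfwith 'I_n (fun i => car (Xs i)) pt i y); split; [apply: Ht|rewrite dfwith_in].
have [f finj] := hmin C' cofC'.
pose g (c : {p | C' p}) : {t | P t} :=
  exist _ (sval (cid (svalP c))) (proj1 (svalP (cid (svalP c)))).
have ginj : injective g.
  move=> c1 c2 /(congr1 sval) /= e; apply: sig_eq.
  rewrite (proj2 (svalP (cid (svalP c1)))) (proj2 (svalP (cid (svalP c2)))).
  by rewrite e.
exists (fun c => g (f c)) => c1 c2 /ginj /finj //.
Qed.

Hypothesis HC : forall i, cof_regular (Xs i).
Variable D : (car (Xs i0) -> Prop) -> Prop.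
Hypothesis HD : min_cofinal (@set_incl (car (Xs i0))) (@bounded (Xs i0)) D.

Lemma D_not_small : ~ Small D.
Proof.
move=> hS.
have hb := hS (fun d x => d (x i0) /\ forall j, j != i0 -> x j = pt j)
  (fun d Dd => slab_bounded (HD.1.1 d Dd)).
case: (@HU i0); apply: bounded_sub (proj_bounded i0 hb) _ => y _.
have [d [Dd hd]] := HD.1.2 _ (bounded_pt (HX i0) y).
have [pz hz] := slab_pt (hd y erefl).
exists (@dfwith 'I_n (fun i => car (Xs i)) pt i0 y); split; last by rewrite dfwith_in.
by exists d; split => //; split.
Qed.

Local Notation T0 := (car (Xs i0) -> Prop).
Definition Rw0 : rel T0 := sval (well_ordering_principle T0).
Lemma HRw0 : well_order Rw0.
Proof. exact: svalP (well_ordering_principle T0). Qed.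
Lemma Rw0_trans a b c : Rw0 a b -> Rw0 b c -> Rw0 a c.
Proof. exact: (wo_trans HRw0). Qed.
Lemma Rw0_anti a b : Rw0 a b -> Rw0 b a -> a = b.
Proof. exact: (wo_anti HRw0). Qed.
Lemma Rw0_refl a : Rw0 a a.
Proof. exact: (wo_refl HRw0). Qed.
Lemma Rw0_total a b : Rw0 a b \/ Rw0 b a.
Proof. exact: (wo_total HRw0). Qed.

Definition ltw0 (a b : T0) := Rw0 a b /\ a <> b.
Definition segD (w : T0) := fun w' => D w' /\ ltw0 w' w.
Definition Sbad0 (w : T0) := D w /\ exists f : {t | D t} -> {t | segD w t}, injective f.
Definition Wset (w : T0) := D w /\ forall s, Sbad0 s -> ltw0 w s.

Lemma lt_le0 a b c : ltw0 a b -> Rw0 b c -> ltw0 a c.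
Proof.
move=> [hab nab] hbc; split; first exact: Rw0_trans hab hbc.
by move=> e; subst c; apply: nab; apply: Rw0_anti.
Qed.

Lemma W1 : exists f : {t | D t} -> {t | Wset t}, injective f.
Proof.
case: (pselect (exists s, Sbad0 s)) => [hs|hs].
  have [s0 [[Ds0 [f finj]] lb]] := wo_min HRw0 hs.
  have incl : forall w, segD s0 w -> Wset w.
    move=> w [Dw lw]; split => // s /lb hs1; exact: lt_le0 lw hs1.
  exists (fun d => exist _ (sval (f d)) (incl _ (svalP (f d)))).
  by move=> d1 d2 /(congr1 sval) /= e; apply: finj; apply: sig_eq.
have incl : forall w, D w -> Wset w.
  by move=> w Dw; split => // s hs1; exfalso; apply: hs; exists s.
exists (fun d => exist _ (sval d) (incl _ (svalP d))).
by move=> d1 d2 /(congr1 sval) /= e; apply: sig_eq.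
Qed.

Lemma W2 w : Wset w -> Small (fun w' => Wset w' /\ Rw0 w' w).
Proof.
move=> [Dw lw].
have hS : Small (segD w).
  apply: byContra => nS; have [f finj] := BigInj HD nS.
  by have [_ ] := lw w (conj Dw (ex_intro _ f finj)).
apply: (small_sub (@small_add1 _ (segD w) w hS)) => w' [[Dw' _] R'].
case: (pselect (w' = w)) => [->|ne]; first by right.
by left; split => //; split.
Qed.

Lemma ent_family i : exists e : T0 -> RR i, (forall w, ent (Xs i) (e w)) /\
  forall F, ent (Xs i) F -> exists w, Wset w /\ forall x y, F x y -> e w x y.
Proof.
have [C1 [C2 [hC1 [hC2 [b bb]]]]] := HC i.
have binj := bij_inj bb.
have [g2 g2inj] := BigInj hC2 D_not_small.
have [g3 g3inj] := W1.
pose rho c := g3 (g2 (b c)).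
have rinj : injective rho by move=> c1 c2 /g3inj /g2inj /binj.
have hex : forall w, exists E : RR i, ent (Xs i) E /\
    forall c : {c | C1 c}, sval (rho c) = w -> E = sval c.
  move=> w; case: (pselect (exists c, sval (rho c) = w)) => [[c hc]|hc].
    exists (sval c); split; first exact: hC1.1.1 _ (svalP c).
    move=> c' hc'; congr sval; apply: rinj; apply: sig_eq; by rewrite hc hc'.
  have [E [hE _]] := ent_ex (HX i) (pt i) (pt i).
  exists E; split => // c hc'; exfalso; apply: hc; by exists c.
have [e he] := choice hex.
exists e; split; first by move=> w; case: (he w).
move=> F hF; have [c [Cc Fc]] := hC1.1.2 F hF.
exists (sval (rho (exist _ c Cc))); split; first exact: svalP.
by move=> x y /Fc; rewrite ((he _).2 (exist _ c Cc) erefl).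
Qed.

Lemma normal_B : normal PX.
Proof.
have [es Hes] := @dchoice _ (fun i => T0 -> RR i) (fun i e => (forall w, ent (Xs i) (e w)) /\
  forall F, ent (Xs i) F -> exists w, Wset w /\ forall x y, F x y -> e w x y) ent_family.
move=> A B hAB.
pose Ew (ws : 'I_n -> T0) := pent (fun i => es i (ws i)).
have hEw : forall ws, ent PX (Ew ws).
  by move=> ws; apply: pent_ent => i; case: (Hes i) => + _; apply.
pose h ws vs := fun x => ball (Ew ws) A x /\ ball (Ew vs) B x.
have hh : forall ws vs, bounded (h ws vs).
  move=> ws vs; have [E [hE [E1 E2]]] := PX_union HX (hEw ws) (hEw vs).
  apply: PX_bounded_sub (hAB E hE) _ => x [b1 b2]; split.
    exact: ball_mono E1 b1.
  exact: ball_mono E2 b2.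
pose Wn (ws : 'I_n -> T0) := forall i, Wset (ws i).
pose le_t (vs ws : 'I_n -> T0) := forall i, exists j, Rw0 (vs i) (ws j).
pose g ws := fun x => exists vs, Wn vs /\ le_t vs ws /\ h ws vs x.
pose g' vs := fun x => exists ws, Wn ws /\ le_t ws vs /\ h ws vs x.
have hmax : forall ws, Wn ws -> exists w, Wset w /\ forall j, Rw0 (ws j) w.
  move=> ws hws.
  suff : forall s : seq 'I_n, exists w, Wset w /\ forall j, j \in s -> Rw0 (ws j) w.
    by move=> /(_ (enum 'I_n)) [w [Ww hw]]; exists w; split => // j; apply: hw; rewrite mem_enum.
  elim=> [|a s [w [Ww hw]]]; first by exists (ws i0); split.
  case: (Rw0_total (ws a) w) => ha.
    exists w; split => // j; rewrite inE => /orP [/eqP ->|/hw] //.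
  exists (ws a); split => // j; rewrite inE => /orP [/eqP ->|/hw hj].
    exact: Rw0_refl.
  exact: Rw0_trans hj ha.
have smallle : forall ws, Wn ws -> Small (fun vs => Wn vs /\ le_t vs ws).
  move=> ws hws; have [w [Ww hw]] := hmax ws hws.
  apply: (small_sub (small_tuple ws (W2 Ww))) => vs [hv hle] i; split => //.
  case: (hle i) => j hj; exact: Rw0_trans hj (hw j).
have hg : forall ws, Wn ws -> bounded (g ws).
  move=> ws hws; have := smallle ws hws (fun vs => h ws vs) (fun vs _ => hh ws vs).
  by move=> hb; apply: PX_bounded_sub hb _ => x [vs [hv [hl hx]]]; exists vs.
have hg' : forall vs, Wn vs -> bounded (g' vs).
  move=> vs hvs; have := smallle vs hvs (fun ws => h ws vs) (fun ws _ => hh ws vs).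
  by move=> hb; apply: PX_bounded_sub hb _ => x [ws [hw [hl hx]]]; exists ws.
have dich : forall ws vs, le_t vs ws \/ le_t ws vs.
  move=> ws vs; case: (pselect (le_t vs ws)) => [hl|hl]; [by left|right].
  have [i hi] := (existsNP _).2 hl.
  move=> i'; exists i; case: (Rw0_total (ws i') (vs i)) => // hr.
  by exfalso; apply: hi; exists i'.
have cofE : forall E, ent PX E -> exists ws, Wn ws /\ forall x y, E x y -> Ew ws x y.
  move=> E [Es [hE HE]].
  have [ws hws] := @dchoice _ (fun _ => T0) (fun i w => Wset w /\ forall x y, Es i x y -> es i w x y)
    (fun i => (Hes i).2 (Es i) (hE i)).
  exists ws; split; first by move=> i; case: (hws i).
  by move=> x y /HE hxy i; case: (hws i) => _; apply.
exists (fun x => exists ws, Wn ws /\ ball (Ew ws) A x /\ ~ g ws x).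
exists (fun x => exists vs, Wn vs /\ ball (Ew vs) B x /\ ~ g' vs x).
split; [|split].
- move=> E hE; have [ws [hws hsub]] := cofE E hE.
  apply: PX_bounded_sub (hg ws hws) _ => x [bx nU]; apply: byContra => ng; apply: nU.
  by exists ws; split => //; split => //; apply: ball_mono hsub bx.
- move=> E hE; have [vs [hvs hsub]] := cofE E hE.
  apply: PX_bounded_sub (hg' vs hvs) _ => x [bx nV]; apply: byContra => ng; apply: nV.
  by exists vs; split => //; split => //; apply: ball_mono hsub bx.
- move=> x [[ws [hws [bA ng]]] [vs [hvs [bB ng']]]].
  case: (dich ws vs) => hl.
    by apply: ng; exists vs; split => //; split => //; split.
  by apply: ng'; exists ws; split => //; split => //; split.
Qed.

End PartB.

Theorem theorem1p8 (n : nat) (Xs : 'I_n -> ballean) :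
  2 <= n ->
  (forall i, is_ballean (Xs i)) ->
  (forall i, unbounded (Xs i)) ->
  (normal (prod_ballean Xs) -> has_linear_base (prod_ballean Xs)) /\
  ((forall i, cof_regular (Xs i)) -> has_linear_base (prod_ballean Xs) ->
     normal (prod_ballean Xs)).
Proof.
move=> hn HX HU.
have h0 : 0 < n by apply: leq_trans hn.
pose i0 := Ordinal h0.
pose i1 := Ordinal hn.
have Hi : i1 != i0 by [].
case: (pselect (exists x : car (prod_ballean Xs), True)) => [[pt _]|hne].
  split.
    by move=> Hnorm; apply: (linear_base_A HX HU Hi pt Hnorm).
  move=> HC [L [h1 [h2 h3]]].
  have [C1 [C2 [_ [hC2 _]]]] := HC i0.
  exact: (normal_B HX HU pt h1 h2 h3 HC hC2).
split.
  move=> _; exists (fun _ => False); split => //; split => // B [E [x _]].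
  by exfalso; apply: hne; exists x.
move=> _ _ A B hAB; exists (fun _ => False), (fun _ => False); split; [|split].
- by move=> E hE; have [F [x _]] := hAB E hE; exfalso; apply: hne; exists x.
- by move=> E hE; have [F [x _]] := hAB E hE; exfalso; apply: hne; exists x.
- by move=> x [].
Qed.
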